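(* Let $q\geq 2$ be an integer and $\mathbf{r}=(r_1,\ldots,r_{q-1})\in\mathbb{N}_0^{q-1}$ with $r_1=\max\mathbf{r}$. Then $\mathscr{W}^{(q)}_{\mathbf{r}}\neq\emptyset$ if and only if both (i) $q\nmid\|\mathbf{r}\|$ and (ii) $\max\mathbf{r}\leq|\mathbf{r}|_q$.
   Context: A composition of $n\in\mathbb{N}_0$ is a finite sequence $\delta=(\delta_1,\ldots,\delta_s)$ of positive integers with $\sum_i\delta_i=n$; write $\ell(\delta)=s$; the unique composition of $0$ is the empty composition. Partial sums: $\delta^+_j=\sum_{i=1}^j\delta_i$. For a positive integer $q$, a composition $\delta$ is called $q'$-cumulative if it is nonempty and $q\nmid\delta^+_j$ for all $1\leq j\leq\ell(\delta)$. For $\mathbf{r}=(r_1,\ldots,r_{q-1})\in\mathbb{N}_0^{q-1}$, let $\mu$ be the partition with exactly $r_i$ parts equal to $i$ for each $1\le i\le q-1$ and no other parts, and let $\mathscr{W}^{(q)}_{\mathbf{r}}$ be the set of $q'$-cumulative compositions that are rearrangements of $\mu$. Define $\|\mathbf{r}\|=\sum_{i=1}^{q-1}ir_i$, $|\mathbf{r}|_q=(q-1)+\sum_{i=2}^{q-1}(q-i)r_i$, and $\max\mathbf{r}=\max\{r_1,\ldots,r_{q-1}\}$. *)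

(* Defs.v *)
From mathcomp Require Import all_boot.
Set Implicit Arguments. Unset Strict Implicit. Unset Printing Implicit Defensive.

(* A vector r = (r_1,...,r_{q-1}) in N_0^{q-1} is represented as a sequence
   [:: r_1; ...; r_{q-1}] of size q-1; r_i = nth 0 r i.-1 for 1 <= i <= q-1. *)
Definition rcomp (r : seq nat) (i : nat) : nat := nth 0 r i.-1.

Definition is_composition (d : seq nat) : bool := all (fun x => 0 < x) d.

Definition psum (d : seq nat) (j : nat) : nat := sumn (take j d).

Definition q_cumulative (q : nat) (d : seq nat) : bool :=
  [&& is_composition d, d != [::] &
      all (fun j => ~~ (q %| psum d j)) (iota 1 (size d))].

Definition mu_of (q : nat) (r : seq nat) : seq nat :=
  flatten [seq nseq (rcomp r i) i | i <- iota 1 q.-1].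

Definition inW (q : nat) (r : seq nat) (d : seq nat) : Prop :=
  q_cumulative q d /\ perm_eq d (mu_of q r).

Definition W_nonempty (q : nat) (r : seq nat) : Prop := exists d, inW q r d.

Definition rnorm (q : nat) (r : seq nat) : nat := \sum_(1 <= i < q) i * rcomp r i.

Definition rabsq (q : nat) (r : seq nat) : nat :=
  (q - 1) + \sum_(2 <= i < q) (q - i) * rcomp r i.

Definition rmax (q : nat) (r : seq nat) : nat := \max_(1 <= i < q) rcomp r i.

(* Main.v *)
Require Import Defs.
From mathcomp Require Import all_boot.
From mathcomp Require Import zify.
Set Implicit Arguments. Unset Strict Implicit.


Section Aux.
Variable q : nat.
Hypothesis hq : 2 <= q.

Lemma modD_cases x e : e < q ->
  (x %% q + e < q /\ (x + e) %% q = x %% q + e) \/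
  (q <= x %% q + e /\ (x + e) %% q = x %% q + e - q).
Proof.
move=> he.
have hs : x %% q < q by apply: ltn_pmod; lia.
have -> : (x + e) %% q = (x %% q + e) %% q.
  by rewrite {1}(divn_eq x q) -addnA modnMDl.
case: (ltnP (x %% q + e) q) => h.
  by left; split => //; rewrite modn_small.
right; split => //.
have -> : x %% q + e = q + (x %% q + e - q) by lia.
rewrite modnDl modn_small; lia.
Qed.

Lemma dvd_step x e : 0 < e < q -> (q %| x + e) = (x %% q + e == q).
Proof.
move=> /andP[e0 eq]; rewrite /dvdn.
have hs : x %% q < q by apply: ltn_pmod; lia.
case: (modD_cases x eq) => [[h ->]|[h ->]]; apply/eqP/eqP; lia.
Qed.

Fixpoint valid x (l : seq nat) : bool :=
  if l is e :: l' then ~~ (q %| x + e) && valid (x + e) l' else true.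

Lemma validE x l : valid x l = all (fun j => ~~ (q %| x + psum l j)) (iota 1 (size l)).
Proof.
elim: l x => [|e l IH] x //=.
rewrite /psum /= take0 addn0 IH; congr (_ && _).
rewrite (iotaDl 1 1) all_map; apply: eq_all => j /=.
by rewrite /psum /= addnA.
Qed.

Definition cnt (i : nat) (m : seq nat) := count_mem i m.

Definition w (i : nat) := if 1 < i then q - i else 0.
Definition sigw (m : seq nat) := sumn (map w m).
Definition Dd x := q - x %% q.

Lemma potential x l : all (fun j => 0 < j < q) l -> valid x l ->
  cnt 1 l + Dd (x + sumn l) <= Dd x + sigw l.
Proof.
rewrite /cnt; elim: l x => [|e l IH] x /=; first by rewrite /sigw /= !addn0.
move=> /andP[/andP[e0 eq] hl] /andP[hd hv].
have := IH (x + e) hl hv; rewrite /sigw /= addnA.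
have hs : x %% q < q by apply: ltn_pmod; lia.
rewrite dvd_step ?e0 // in hd.
rewrite /Dd /w.
move/eqP: hd => hd.
case: (modD_cases x eq) => [[h ->]|[h ->]]; case: eqP => E; try case: ifP => H; lia.
Qed.

Definition bnd (j : nat) := 0 < j < q.

Definition Inv x m := m != [::] ->
  [/\ ~~ (q %| x + sumn m), cnt 1 m <= Dd x - 1 + sigw m &
      forall i, 1 < i -> cnt i m <= cnt 1 m + (if i == (Dd x).+1 then 1 else 0)].

Lemma rem_facts (e : nat) (m : seq nat) : e \in m ->
  [/\ forall i : nat, cnt i m = (e == i) + cnt i (rem e m),
      sumn m = e + sumn (rem e m) & sigw m = w e + sigw (rem e m)].
Proof.
move=> he; have hp := perm_to_rem he; split.
- by move=> i; rewrite /cnt (permP hp).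
- by rewrite (perm_sumn hp).
- by rewrite /sigw (perm_sumn (perm_map w hp)).
Qed.

Lemma Dd_bounds x : 1 <= Dd x <= q.
Proof. have hs : x %% q < q by apply: ltn_pmod; lia. rewrite /Dd; lia. Qed.

Lemma Dd_lt x e : 0 < e -> e < Dd x -> Dd (x + e) = Dd x - e.
Proof.
move=> e0 h; have hs : x %% q < q by apply: ltn_pmod; lia.
have eq : e < q by rewrite /Dd in h; lia.
rewrite /Dd in h *; case: (modD_cases x eq) => [[h1 ->]|[h1 ->]]; lia.
Qed.

Lemma Dd_gt x e : Dd x < e -> e < q -> Dd (x + e) = Dd x + q - e.
Proof.
move=> h eq; have hs : x %% q < q by apply: ltn_pmod; lia.
rewrite /Dd in h *; case: (modD_cases x eq) => [[h1 ->]|[h1 ->]]; lia.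
Qed.

Lemma ndvd_iff x e : 0 < e < q -> (q %| x + e) = (e == Dd x).
Proof.
move=> he; have hs : x %% q < q by apply: ltn_pmod; lia.
rewrite dvd_step //; rewrite /Dd; apply/eqP/eqP; lia.
Qed.

Lemma good_move x (m : seq nat) (e : nat) : all bnd m -> e \in m -> e != Dd x -> ~~ (q %| x + sumn m) ->
  cnt 1 (rem e m) <= Dd (x+e) - 1 + sigw (rem e m) ->
  (forall i, 1 < i -> cnt i (rem e m) <=
     cnt 1 (rem e m) + (if i == (Dd (x+e)).+1 then 1 else 0)) ->
  [/\ e \in m, ~~ (q %| x + e) & Inv (x + e) (rem e m)].
Proof.
move=> hb he hne hA hB hM; split => //.
  by rewrite ndvd_iff ?hne //; exact: (allP hb).
move=> _; split => //.
by case: (rem_facts he) => _ hs _; rewrite -addnA -hs.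
Qed.

Lemma split_sum (f : nat -> nat) j m :
  sumn (map f m) = cnt j m * f j + sumn (map f (filter (predC1 j) m)).
Proof.
rewrite /cnt; elim: m => [|k m IH] //=; rewrite IH.
by case: (eqVneq k j) => [->|E] /=; rewrite ?mulSn; lia.
Qed.

Lemma ones_sum s : all bnd s -> sigw s = 0 -> sumn s = cnt 1 s.
Proof.
rewrite /sigw /cnt; elim: s => [|k s IH] //= /andP[/andP[k0 kq] hs].
rewrite /w; case: ifP => hk H.
  lia.
have -> : k = 1 by lia.
by rewrite /= IH //; lia.
Qed.

Lemma cnt_filter j m : j != 1 -> cnt 1 (filter (predC1 j) m) = cnt 1 m.
Proof.
move=> hj; rewrite /cnt; elim: m => [|k m IH] //=.
case: (eqVneq k j) => [->|E] /=; rewrite IH //.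
by rewrite (negbTE hj).
Qed.

Lemma no_big_sig m : ~~ has (fun j => 1 < j) m -> sigw m = 0.
Proof.
rewrite /sigw; elim: m => [|k m IH] //= /norP[hk hm].
by rewrite IH // /w (negbTE hk).
Qed.

Lemma notin_cnt (j : nat) (m : seq nat) : j \notin m -> cnt j m = 0.
Proof. by rewrite /cnt => /count_memPn. Qed.

Lemma dvd_D x c : c = 1 \/ Dd x = q -> q %| x + c * Dd x.
Proof.
have hx := divn_eq x q; have hs : x %% q < q by apply: ltn_pmod; lia.
move: hx; rewrite /Dd; move: (x %/ q) (x %% q) hs => k s hs hx.
case=> [->|hD]; apply/dvdnP.
  by exists (k + 1); nia.
by exists (k + c); nia.
Qed.

Lemma ar1 c t : 0 < c -> 0 < t -> c + (t - 1) <= c * t.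
Proof. move=> hc; case: t => // t _; rewrite mulnS; have := leq_pmull t hc; lia. Qed.

Lemma ar2 c u : 1 < c -> u + u <= c * u.
Proof. move=> hc; have := leq_mul hc (leqnn u); lia. Qed.

Lemma key x m j : all bnd m -> ~~ (q %| x + sumn m) -> 1 < j -> j < Dd x ->
  cnt j m = cnt 1 m -> 0 < cnt 1 m -> cnt 1 m + q - Dd x + 1 <= sigw m.
Proof.
move=> hb hA hj1 hjD hc hn.
have hD := Dd_bounds x.
have hsp := split_sum w j m; rewrite -/(sigw m) hc in hsp.
have hwj : w j = q - j by rewrite /w hj1.
rewrite hwj in hsp.
have hbf : all bnd (filter (predC1 j) m).
  by apply/allP => k; rewrite mem_filter => /andP[_ hk]; exact: (allP hb).
case: (ltnP j (Dd x - 1)) => hj.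
  rewrite hsp; move: (cnt 1 m) hn => c hn.
  move: (sumn _) => R. nia.
have hjD1 : j = Dd x - 1 by lia.
case: (posnP (sumn (map w (filter (predC1 j) m)))) => hR; last first.
  rewrite hsp; have := ar1 (t := q - j) hn; move: (cnt 1 m * (q - j)) => P; lia.
have hsum := split_sum id j m; rewrite map_id in hsum.
have hfs := ones_sum hbf hR.
rewrite cnt_filter in hfs; last by apply/eqP; lia.
rewrite map_id hfs hc in hsum.
case: (eqVneq (cnt 1 m) 1) => hc1.
  exfalso; move/negP: hA; apply; rewrite hsum hc1.
  have -> : x + (1 * j + 1) = x + 1 * Dd x by lia.
  exact: dvd_D (or_introl erefl).
case: (eqVneq (Dd x) q) => hDq.
  exfalso; move/negP: hA; apply; rewrite hsum.
  have -> : x + (cnt 1 m * j + cnt 1 m) = x + cnt 1 m * Dd x.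
    by rewrite (addnC (cnt 1 m * j)) -mulnS; congr (_ + _ * _); lia.
  exact: dvd_D (or_intror hDq).
rewrite hsp hR; have := @ar2 (cnt 1 m) (q - Dd x); rewrite hjD1; have -> : q - (Dd x - 1) = (q - Dd x) + 1 by lia. rewrite mulnDr muln1; move: (cnt 1 m * (q - Dd x)) => P; lia.
Qed.

Ltac crunch := repeat match goal with
 | |- context [?a == ?b] => case: (a =P b) => ? /=
 end; lia.

Lemma step x m : all bnd m -> m != [::] -> Inv x m ->
  exists e : nat, [/\ e \in m, ~~ (q %| x + e) & Inv (x + e) (rem e m)].
Proof.
move=> hb hm HI; have [hA hB hM] := HI hm.
have hD := Dd_bounds x.
have hbe : forall j : nat, j \in m -> 0 < j < q by move=> j /(allP hb).
have [j0 hj0] : exists j : nat, j \in m by case: m hm {hb HI hA hB hM hbe} => // j m' _; exists j; rewrite inE eqxx.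
case: (eqVneq (Dd x) 1) => HD1.
-
  have [e [he he1 he2]] : exists e : nat, [/\ e \in m, 1 < e & (2 \in m -> e = 2)].
    case: (boolP (2 \in m)) => h2; first by exists 2.
    case: (boolP (has (fun j => 1 < j) m)) => hh.
      by case/hasP: hh => e he he1; exists e; split => // /(negP h2).
    exfalso; have := no_big_sig hh; move=> hs0.
    have hj := hbe _ hj0.
    have hj1 : j0 <= 1 by rewrite leqNgt; apply: contra hh => H; apply/hasP; exists j0.
    have ej : j0 = 1 by lia.
    subst j0; have : 0 < cnt 1 m by rewrite /cnt lt0n; apply/eqP => /count_memPn; rewrite hj0.
    rewrite HD1 hs0 in hB; lia.
  have heq := hbe _ he.
  case: (rem_facts he) => hc hs hsg.
  have hDe : Dd (x + e) = Dd x + q - e by apply: Dd_gt; lia.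
  exists e; apply: good_move => //; first by rewrite HD1; crunch.
  + have := hc 1; rewrite hsg /w he1 hDe in hB *.
    crunch.
  + move=> i hi; have := hc i; have := hc 1; have := hM i hi.
    rewrite hDe HD1.
    case: (eqVneq i 2) => [Ei|Ei].
      subst i; case: (boolP (2 \in m)) => h2.
        rewrite he2 //; crunch.
      rewrite (notin_cnt h2); crunch.
    crunch.
-
  have HD2 : 2 <= Dd x by lia.
  case: (boolP (((Dd x).+1 \in m) && (cnt (Dd x).+1 m == (cnt 1 m).+1))) => H1.
    case/andP: H1 => he /eqP hce.
    have heq := hbe _ he.
    case: (rem_facts he) => hc hs hsg.
    have hDe : Dd (x + (Dd x).+1) = Dd x + q - (Dd x).+1 by apply: Dd_gt; lia.
    exists (Dd x).+1; apply: good_move => //; first by crunch.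
    + have hw : w (Dd x).+1 = q - (Dd x).+1 by rewrite /w ifT //; lia.
      have := hc 1; rewrite hsg hw hDe in hB *; crunch.
    + move=> i hi; have := hc i; have := hc 1; have := hM i hi; rewrite hDe; crunch.
  have hle : forall i, 1 < i -> cnt i m <= cnt 1 m.
    move=> i hi; have := hM i hi; case: (eqVneq i (Dd x).+1) => [Ei|Ei] /=; last by lia.
    rewrite Ei in H1 *; case: (boolP ((Dd x).+1 \in m)) => hin.
      by rewrite hin /= in H1; move/eqP: H1; lia.
    by rewrite (notin_cnt hin).
  case: (boolP (has (fun j => Dd x < j) m)) => H2.
    case/hasP: H2 => e he hgt.
    have heq := hbe _ he.
    case: (rem_facts he) => hc hs hsg.
    have hDe : Dd (x + e) = Dd x + q - e by apply: Dd_gt; lia.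
    exists e; apply: good_move => //; first by crunch.
    + have hw : w e = q - e by rewrite /w ifT //; lia.
      have := hc 1; rewrite hsg hw hDe in hB *; crunch.
    + move=> i hi; have := hc i; have := hc 1; have := hle i hi; rewrite hDe; crunch.
  have hnd : forall k, k \in m -> k <= Dd x.
    by move=> k hk; rewrite leqNgt; apply: contra H2 => H; apply/hasP; exists k.
  have hn : 0 < cnt 1 m.
    rewrite lt0n; apply/eqP => hn0; have := hbe _ hj0; case: (eqVneq j0 1) => [E|E].
      by subst j0; move: hn0; rewrite /cnt => /count_memPn; rewrite hj0.
    move=> hj0b; have := hle j0; have : 0 < cnt j0 m.
      by rewrite /cnt lt0n; apply/eqP => /count_memPn; rewrite hj0.
    rewrite hn0; crunch.
  case: (boolP (has (fun j => (1 < j) && (j != Dd x) && (cnt 1 m <= cnt j m)) m)) => H3.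
    case/hasP: H3 => j hj /andP[/andP[hj1 hjD] hjc].
    have hjlt : j < Dd x by have := hnd _ hj; move/eqP: hjD; lia.
    have hcj : cnt j m = cnt 1 m by have := hle j hj1; lia.
    have hk := key hb hA hj1 hjlt hcj hn.
    case: (rem_facts hj) => hc hs hsg.
    have hDe : Dd (x + j) = Dd x - j by apply: Dd_lt; lia.
    exists j; apply: good_move => //.
    + have := hc 1; rewrite hsg /w hj1 hDe in hk hB *; crunch.
    + move=> i hi; have := hc i; have := hc 1; have := hle i hi; rewrite hDe; crunch.
  have h1m : 1 \in m.
    by apply/negPn/negP => /count_memPn h; move: hn; rewrite /cnt h.
  case: (rem_facts h1m) => hc hs hsg.
  have hDe : Dd (x + 1) = Dd x - 1 by apply: Dd_lt; lia.
  exists 1; apply: good_move => //; first by crunch.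
  + have := hc 1; rewrite hsg /w /= hDe in hB *; crunch.
  + move=> i hi; have := hc i; have := hc 1; have := hle i hi; rewrite hDe.
    case: (boolP (i \in m)) => him; last by rewrite (notin_cnt him); crunch.
    have /= hh := (hasPn H3) i him.
    case: (eqVneq i (Dd x)) => [Ei|Ei]; first by crunch.
    move: hh; rewrite hi Ei /= -ltnNge => hh; crunch.
Qed.
End Aux.


Lemma build q (hq : 1 < q) k : forall m x, size m <= k -> all (bnd q) m -> Inv q x m ->
  exists l, perm_eq l m /\ valid q x l.
Proof.
elim: k => [|k IH] m x hs hb hI.
  by case: m hs {hb hI} => // _; exists [::].
case: (eqVneq m [::]) => [->|hm]; first by exists [::].
have [e [he hd hI']] := step hq hb hm hI.
have hpm := perm_to_rem he.
have hb' : all (bnd q) (rem e m).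
  by rewrite (perm_all _ hpm) /= in hb; case/andP: hb.
have hs' : size (rem e m) <= k by rewrite size_rem //; case: (size m) hs.
have [l [hp hv]] := IH _ _ hs' hb' hI'.
exists (e :: l); split; last by rewrite /= hd hv.
rewrite perm_sym; apply: perm_trans hpm _; rewrite perm_cons perm_sym; exact: hp.
Qed.

Lemma count_sumn (T : Type) (p : pred T) s : count p s = sumn (map (fun k => nat_of_bool (p k)) s).
Proof. by elim: s => //= k s ->. Qed.

Lemma mu_sum q r (f : nat -> nat) : sumn (map f (mu_of q r)) = \sum_(1 <= i < q) rcomp r i * f i.
Proof.
rewrite /mu_of map_flatten sumn_flatten -map_comp sumnE big_map /index_iota subn1.
by rewrite big_map; apply: eq_bigr => i _ /=; rewrite map_nseq sumn_nseq mulnC.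
Qed.

Lemma mu_bnd q r : all (bnd q) (mu_of q r).
Proof.
apply/allP => j /flatten_mapP [i hi hj].
rewrite mem_nseq in hj; case/andP: hj => _ /eqP ->.
rewrite mem_iota in hi; rewrite /bnd; lia.
Qed.

Lemma mu_cnt q r j : cnt j (mu_of q r) = if 0 < j < q then rcomp r j else 0.
Proof.
rewrite /cnt count_sumn mu_sum; case: ifP => hj.
  rewrite (bigD1_seq j) /=; [|by rewrite mem_index_iota|by apply: iota_uniq].
  rewrite eqxx muln1 big1_seq ?addn0 // => i /andP[hij _].
  by rewrite (negbTE hij) muln0.
rewrite big1_seq // => i /andP[_ hi]; rewrite mem_index_iota in hi.
case: (eqVneq i j) => [E|E]; last by rewrite /= (negbTE E) muln0.
by subst i; rewrite hi in hj.
Qed.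

Lemma sig_mu q r (hq : 1 < q) : sigw q (mu_of q r) = \sum_(2 <= i < q) (q - i) * rcomp r i.
Proof.
rewrite /sigw mu_sum big_ltn // (_ : w q 1 = 0) // muln0 add0n.
by apply: eq_big_nat => i hi; rewrite /w ifT; [exact: mulnC | lia].
Qed.

Lemma sum_mu q r : sumn (mu_of q r) = rnorm q r.
Proof.
have h := mu_sum q r id; rewrite map_id in h; rewrite h /rnorm.
by apply: eq_bigr => i _; rewrite mulnC.
Qed.

Lemma Dd0 q : Dd q 0 = q.
Proof. by rewrite /Dd mod0n subn0. Qed.

Theorem lemma1 (q : nat) (r : seq nat) (hq : 2 <= q) (hsize : size r = q - 1)
  (hmax : rcomp r 1 = rmax q r) :
  W_nonempty q r <-> (~~ (q %| rnorm q r) /\ rmax q r <= rabsq q r).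
Proof.
split.
- case=> d [hqc hp]; case/and3P: hqc => hcomp hne hall.
  have hb : all (bnd q) d by rewrite (perm_all _ hp) mu_bnd.
  have hsumd : sumn d = rnorm q r by rewrite (perm_sumn hp) sum_mu.
  split.
    have hs0 : 0 < size d by case: d hne {hcomp hall hp hb hsumd}.
    have hin : size d \in iota 1 (size d) by rewrite mem_iota; lia.
    have := (allP hall) _ hin; by rewrite /psum take_size hsumd.
  have hv : valid q 0 d by rewrite validE.
  have hpot := potential hq hb hv.
  have hD := Dd_bounds hq (0 + sumn d).
  rewrite Dd0 in hpot.
  have h1 : cnt 1 d = rcomp r 1.
    by rewrite /cnt (permP hp) -/(cnt 1 (mu_of q r)) mu_cnt ifT //; lia.
  have hsg : sigw q d = \sum_(2 <= i < q) (q - i) * rcomp r i.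
    by rewrite /sigw (perm_sumn (perm_map _ hp)) -/(sigw q (mu_of q r)) sig_mu.
  rewrite -hmax /rabsq -hsg -h1; lia.
- case=> hA hB.
  have HI : Inv q 0 (mu_of q r).
    move=> _; split.
    + by rewrite add0n sum_mu.
    + rewrite Dd0 mu_cnt ifT; last lia.
      by rewrite sig_mu // hmax; move: hB; rewrite /rabsq; lia.
    + move=> i hi; rewrite !mu_cnt (@ifT _ (0 < 1 < q)); last lia.
      case: ifP => hiq; last lia.
      rewrite hmax /rmax; apply: leq_trans (leq_addr _ _).
      by apply: (leq_bigmax_seq (F := fun i => rcomp r i)) => //; rewrite mem_index_iota; lia.
  have [l [hp hv]] := build hq (leqnn _) (mu_bnd q r) HI.
  exists l; split => //.
  have hb : all (bnd q) l by rewrite (perm_all _ hp) mu_bnd.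
  apply/and3P; split.
  + apply/allP => j hj; have := allP hb j hj; rewrite /bnd; case/andP => //.
  + apply/eqP => hl; move: hA; rewrite -sum_mu -(perm_sumn hp) hl /= dvdn0.
    by [].
  + by rewrite validE in hv.
Qed.
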